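(* Suppose that $X$ is a compact Hausdorff space such that every continuous image of $X$ of weight at most $2^{\aleph_0}$ is Fréchet. Then $X$ is Fréchet.
   Context: A space $X$ is Fréchet (Fréchet–Urysohn) if whenever $Z\subseteq X$ and $x$ is in the closure of $Z$ (an accumulation point of $Z$), there is a sequence $(z_n)_{n\in\mathbb N}$ in $Z$ converging to $x$. The weight of a space is the least cardinality of a base. *)

(* Defs.v *)
From HB Require Import structures.
From mathcomp Require Import all_boot all_order all_algebra.
From mathcomp Require Import all_classical all_reals all_analysis.
Set Implicit Arguments. Unset Strict Implicit. Unset Printing Implicit Defensive.
Local Open Scope classical_set_scope.

Definition frechet (X : topologicalType) : Prop :=
  forall (Z : set X) (x : X), closure Z x ->
    exists u : nat -> X, (forall n, Z (u n)) /\ u @ \oo --> x.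

Definition is_base (Y : topologicalType) (B : set (set Y)) : Prop :=
  (forall b, B b -> open b) /\
  (forall (U : set Y) (y : Y), open U -> U y -> exists2 b, B b & b y /\ b `<=` U).

Definition weight_le_continuum (Y : topologicalType) : Prop :=
  exists2 B : set (set Y), is_base B & card_le B [set: set nat].

(* Main.v *)
Require Import Defs.
From HB Require Import structures.
From mathcomp Require Import all_boot all_order all_algebra.
From mathcomp Require Import all_classical all_reals all_analysis.
From mathcomp Require Import Rstruct.
From mathcomp Require Import lra.
Set Implicit Arguments. Unset Strict Implicit. Unset Printing Implicit Defensive.
Import Order.TTheory GRing.Theory Num.Theory numFieldNormedType.Exports.
Local Open Scope classical_set_scope.
Local Open Scope ring_scope.

Inductive code := Leaf | Node of (nat -> nat) & (nat -> code).

Fixpoint enc (c : code) (p : seq nat) (i v : nat) : Prop :=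
  match c with
  | Leaf => p = [::] /\ i = 0%N /\ v = 0%N
  | Node a ch => match p with
                 | [::] => exists k, i = k.+1 /\ v = a k
                 | j :: p' => enc (ch j) p' i v end
  end.

Lemma enc_inj c1 c2 : (forall p i v, enc c1 p i v <-> enc c2 p i v) -> c1 = c2.
Proof.
elim: c1 c2 => [|a ch IH] [|a' ch'] // H.
- by have [k [] //] := proj1 (H [::] 0%N 0%N) (conj erefl (conj erefl erefl)).
- by have [k [] //] := proj2 (H [::] 0%N 0%N) (conj erefl (conj erefl erefl)).
have -> : a = a'.
  apply/funext => k.
  have [k' [[<-] ->]] := proj1 (H [::] k.+1 (a k)) (ex_intro _ k (conj erefl erefl)).
  by [].
have -> // : ch = ch'.
by apply/funext => j; apply: IH => p i v; exact: (H (j :: p) i v).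
Qed.

Definition code_nat (c : code) : set nat :=
  [set n | exists p i v, enc c p i v /\ n = pickle (p, i, v)].

Lemma code_nat_inj : injective code_nat.
Proof.
move=> c1 c2 E; apply: enc_inj => p i v.
split=> H.
- have : code_nat c2 (pickle (p, i, v)) by rewrite -E; exists p, i, v.
  by case=> p' [i' [v' [H' /(pcan_inj (@pickleK _)) [-> -> ->]]]].
- have : code_nat c1 (pickle (p, i, v)) by rewrite E; exists p, i, v.
  by case=> p' [i' [v' [H' /(pcan_inj (@pickleK _)) [-> -> ->]]]].
Qed.


HB.instance Definition _ := gen_eqMixin code.
HB.instance Definition _ := gen_choiceMixin code.
HB.instance Definition _ := isPointed.Build code Leaf.

Definition dq (m : nat) : rat * rat := odflt (0, 0) (unpickle m).

Definition sat (R : realType) (fs : nat -> R) (a : nat -> nat) : Prop :=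
  forall i, (i < a 1)%N -> `|fs i - ratr (dq (a i.+2)).1| < ratr (dq (a i.+2)).2.

Definition Ycar (R : realType) (X : Type) (e : X -> code -> R) :=
  {p : code -> R | exists y, e y = p}.

HB.instance Definition _ (R : realType) (X : Type) (e : X -> code -> R) :=
  gen_eqMixin (Ycar e).
HB.instance Definition _ (R : realType) (X : Type) (e : X -> code -> R) :=
  gen_choiceMixin (Ycar e).

Definition bY (R : realType) (X : Type) (e : X -> code -> R) (c : code) : set (Ycar e) :=
  match c with
  | Leaf => set0
  | Node a ch => [set p | sat (fun i => sval p (ch i)) a]
  end.
Arguments bY {R X} e c.

Definition cjoin (a1 : nat -> nat) (ch1 : nat -> code) (a2 : nat -> nat) (ch2 : nat -> code) :=
  Node (fun m => match m with 0 => 0%N | 1 => (a1 1 + a2 1)%N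
     | i.+2 => if (i < a1 1)%N then a1 i.+2 else a2 (i - a1 1).+2 end)
   (fun i => if (i < a1 1)%N then ch1 i else ch2 (i - a1 1)%N).

Lemma bY_join (R : realType) (X : Type) (e : X -> code -> R) a1 ch1 a2 ch2 :
  bY e (cjoin a1 ch1 a2 ch2) = bY e (Node a1 ch1) `&` bY e (Node a2 ch2).
Proof.
apply/seteqP; split => p /=.
- move=> H; split=> i Hi.
  + have := H i (leq_trans Hi (leq_addr _ _)); by rewrite Hi.
  + have := H (a1 1 + i)%N; rewrite ltn_add2l Hi ltnNge leq_addr /= addKn.
    by apply.
- move=> [H1 H2] i Hi; case: ltnP => Hi1; first exact: H1.
  apply: H2; rewrite -(ltn_add2l (a1 1)) subnKC //.
Qed.

Lemma bY_cover (R : realType) (X : Type) (e : X -> code -> R) :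
  \bigcup_(i in [set: code]) bY e i = setT.
Proof.
apply/seteqP; split => // p _; exists (Node (fun _ => 0%N) (fun _ => Leaf)) => //.
Qed.

Lemma bY_join' (R : realType) (X : Type) (e : X -> code -> R) i j t :
  [set: code] i -> [set: code] j -> bY e i t -> bY e j t ->
    exists k, [/\ [set: code] k, bY e k t & bY e k `<=` bY e i `&` bY e j].
Proof.
case: i => [|a1 ch1] // _; case: j => [|a2 ch2] // _ H1 H2.
exists (cjoin a1 ch1 a2 ch2); rewrite bY_join; split => //.
Qed.

HB.instance Definition _ (R : realType) (X : Type) (e : X -> code -> R) :=
  isBaseTopological.Build (Ycar e) (@bY_cover R X e) (@bY_join' R X e).

Section Ytop.
Variables (R : realType) (X : Type) (e : X -> code -> R).
Let Y : topologicalType := Ycar e.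

Lemma open_bY c : open (bY e c : set Y).
Proof. exists [set c] => //. apply/seteqP; split=> p; [by case=> ? -> |by exists c]. Qed.

Lemma Y_openP (U : set Y) (p : Y) : open U -> U p -> exists c, bY e c p /\ bY e c `<=` U.
Proof.
move=> [D' _ <-] [c Dc bc]; exists c; split => // q bq; by exists c.
Qed.

Lemma Y_cont (T : topologicalType) (f : T -> Y) :
  (forall c, open (f @^-1` bY e c)) -> continuous f.
Proof.
move=> H; apply/continuousP => U [D' _ <-].
rewrite preimage_bigcup; apply: bigcup_open => c _; exact: H.
Qed.
End Ytop.

Definition mk1 (c : code) (q r : rat) :=
  Node (fun m => match m with 1 => 1%N | 2 => pickle (q, r) | _ => 0%N end) (fun _ => c).

Lemma bY_mk1 (R : realType) (X : Type) (e : X -> code -> R) c q r p :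
  bY e (mk1 c q r) p <-> `|sval p c - ratr q| < ratr r.
Proof.
have E : dq (pickle (q, r)) = (q, r) by rewrite /dq pickleK.
split.
- by move=> /(_ 0%N isT); rewrite [dq _]E.
- by move=> H [|i] // _; rewrite [dq _]E.
Qed.

Lemma Y_hausdorff (R : realType) (X : Type) (e : X -> code -> R) :
  hausdorff_space (Ycar e).
Proof.
rewrite open_hausdorff => p q /eqP pq.
have [c pcq] : exists c, sval p c != sval q c.
  case: (pselect (exists c, sval p c != sval q c)) => [//|H]; exfalso.
  apply: pq; case: p q H => [p hp] [q hq] H.
  have E : p = q by apply/funext => c; apply/eqP; apply/negPn/negP => Hc; apply: H; exists c.
  by subst q; congr exist; exact: Prop_irrelevance.
set d := `|sval p c - sval q c|.
have d0 : 0 < d by rewrite normr_gt0 subr_eq0.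
have [rho] := rat_in_itvoo (divr_gt0 d0 (ltr0n R 4%N)).
rewrite in_itv /= => /andP[r0 r4].
have [a1] : exists a, (ratr a : R) \in `](sval p c - ratr rho), (sval p c + ratr rho)[.
  by apply: rat_in_itvoo; lra.
rewrite in_itv /= => /andP[a1l a1r].
have [a2] : exists a, (ratr a : R) \in `](sval q c - ratr rho), (sval q c + ratr rho)[.
  by apply: rat_in_itvoo; lra.
rewrite in_itv /= => /andP[a2l a2r].
exists (bY e (mk1 c a1 rho), bY e (mk1 c a2 rho)); first split; rewrite ?inE.
- apply/bY_mk1; rewrite ltr_norml; apply/andP; split; lra.
- apply/bY_mk1; rewrite ltr_norml; apply/andP; split; lra.
split; [exact: open_bY|exact: open_bY|].
change (bY e (mk1 c a1 rho) `&` bY e (mk1 c a2 rho) = set0).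
rewrite -subset0 => s [/bY_mk1 + /bY_mk1].
rewrite !ltr_norml => /andP[h1 h2] /andP[h3 h4].
move: r4; rewrite /d; case: (lerP 0 (sval p c - sval q c)) => H.
- rewrite ger0_norm //; lra.
- rewrite ltr0_norm //; lra.
Qed.

Fixpoint interp (X : Type) (R : realType) (G : (nat -> X) -> X -> R)
  (P : (nat -> X -> R) -> (nat -> nat) -> X) (z0 : X) (c : code) : (X -> R) * X :=
  match c with
  | Leaf => (fun _ => 0, z0)
  | Node a ch => if a 0%N == 0%N then (G (fun n => (interp G P z0 (ch n)).2), z0)
                 else (fun _ => 0, P (fun i => (interp G P z0 (ch i)).1) a)
  end.

Lemma open_forall_lt (T : topologicalType) (Q : nat -> set T) n :
  (forall i, open (Q i)) -> open [set y | forall i, (i < n)%N -> Q i y].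
Proof.
move=> oQ; elim: n => [|n IH].
  have -> : [set y : T | forall i, (i < 0)%N -> Q i y] = setT.
    by apply/seteqP; split => // y _ i.
  exact: openT.
have -> : [set y | forall i, (i < n.+1)%N -> Q i y] =
    [set y | forall i, (i < n)%N -> Q i y] `&` Q n.
  apply/seteqP; split => y.
  - by move=> H; split; [move=> i Hi; apply: H; exact: ltnW|exact: H].
  - by move=> [H1 H2] i; rewrite ltnS leq_eqVlt => /orP[/eqP ->|]; [|exact: H1].
exact: openI.
Qed.

Lemma open_dist (T : topologicalType) (R : realType) (g : T -> R) (q r : R) :
  continuous g -> open [set y | `|g y - q| < r].
Proof.
move=> gc.
have -> : [set y | `|g y - q| < r] = g @^-1` ([set t | q - r < t] `&` [set t | t < q + r]).
  by apply/seteqP; split => y /=; rewrite ltr_distl => /andP.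
by apply: (proj1 (continuousP _) gc); apply: openI; [exact: open_gt|exact: open_lt].
Qed.

Lemma open_sat (T : topologicalType) (R : realType) (fs : nat -> T -> R) a :
  (forall i, continuous (fs i)) -> open [set y | sat (fun i => fs i y) a].
Proof.
move=> fc; apply: (@open_forall_lt T (fun i y =>
  `|fs i y - ratr (dq (a i.+2)).1| < ratr (dq (a i.+2)).2)) => i.
exact: open_dist.
Qed.

Section main.
Variables (R : realType) (X : topologicalType) (Z : set X) (x : X) (z0 : X).
Hypotheses (cX : compact [set: X]) (hX : hausdorff_space X) (clx : closure Z x).
Hypothesis Zz0 : Z z0.
Hypothesis nconv : forall u : nat -> X, (forall n, Z (u n)) -> ~ (u @ \oo --> x).

Definition goodG (u : nat -> X) (g : X -> R) :=
  [/\ continuous g, g x = 0 & forall N, exists n, (N <= n)%N /\ g (u n) = 1].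

Definition G (u : nat -> X) : X -> R :=
  if pselect (exists g, goodG u g) is left h then projT1 (cid h) else fun _ => 0.

Definition P (fs : nat -> X -> R) (a : nat -> nat) : X :=
  if pselect (exists z, Z z /\ sat (fun i => fs i z) a) is left h then projT1 (cid h) else z0.

Lemma exists_sep (u : nat -> X) : ~ (u @ \oo --> x) -> exists g, goodG u g.
Proof.
move=> nc.
have [U [oU Ux nU]] : exists U, [/\ open U, U x &
    forall N, exists n, (N <= n)%N /\ ~ U (u n)].
  apply: contrapT => H; apply: nc => B; rewrite nbhsE => -[U [oU Ux] UB].
  case: (pselect (forall N, exists n, (N <= n)%N /\ ~ U (u n))) => [H'|].
    by exfalso; apply: H; exists U.
  move=> /existsNP [N HN]; exists N => // n /= Nn.
  apply: UB; apply: contrapT => nUn; apply: HN; by exists n.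
have CR : completely_regular_space X.
  apply: (@normal_completely_regular R); [exact: compact_normal|exact: hausdorff_accessible].
have sep := CR x (~` U) (open_closedC oU) (fun h => h Ux).
have [g [gc _ g0 g1]] := (@uniform_separatorP X R _ _).1 sep.
exists g; split => //.
- by apply: g0; exists x.
- move=> N; have [n [Nn nUn]] := nU N; exists n; split => //.
  by apply: g1; exists (u n).
Qed.

Lemma G_cont u : continuous (G u).
Proof.
rewrite /G; case: pselect => [h|_]; first by case: (projT2 (cid h)).
by move=> ?; exact: cvg_cst.
Qed.

Lemma G_good u : (forall n, Z (u n)) -> goodG u (G u).
Proof.
move=> Zu; rewrite /G; case: pselect => [h|]; first exact: (projT2 (cid h)).
by move=> H; exfalso; apply: H; apply: exists_sep; exact: nconv.
Qed.

Lemma P_spec fs a : (exists z, Z z /\ sat (fun i => fs i z) a) ->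
  Z (P fs a) /\ sat (fun i => fs i (P fs a)) a.
Proof.
move=> h; rewrite /P; case: pselect => [h'|//]; exact: (projT2 (cid h')).
Qed.

Lemma P_Z fs a : Z (P fs a).
Proof.
rewrite /P; case: pselect => [h'|//]; exact: (projT2 (cid h')).1.
Qed.

Let I c := interp G P z0 c.

Lemma interp_cont c : continuous (I c).1.
Proof.
case: c => [|a ch]; first by move=> ?; exact: cvg_cst.
rewrite /I /=; case: ifP => _ /=; first exact: G_cont.
by move=> ?; exact: cvg_cst.
Qed.

Lemma interp_Z c : Z (I c).2.
Proof.
case: c => [|a ch] //; rewrite /I /=; case: ifP => _ //=; exact: P_Z.
Qed.

Definition e (y : X) (c : code) : R := (I c).1 y.

Definition fY (y : X) : Ycar e := exist _ (e y) (ex_intro _ y erefl).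

Lemma fY_cont : continuous fY.
Proof.
apply: Y_cont => -[|a ch].
  by have -> : fY @^-1` bY e Leaf = set0 by []; exact: open0.
by apply: (@open_sat X R (fun i => (I (ch i)).1)) => i; exact: interp_cont.
Qed.

Lemma fY_surj (p : Ycar e) : exists y, fY y = p.
Proof.
case: p => p [y hy]; exists y; subst p; congr exist; exact: Prop_irrelevance.
Qed.

Definition pickc (S : set (Ycar e)) : code :=
  if pselect (exists c, bY e c = S) is left h then projT1 (cid h) else Leaf.

Lemma pickcE c : bY e (pickc (bY e c)) = bY e c.
Proof.
rewrite /pickc; case: pselect => [h|[]]; last by exists c.
exact: (projT2 (cid h)).
Qed.

Lemma Y_weight : weight_le_continuum (Ycar e).
Proof.
exists [set bY e c | c in setT].
  split; first by move=> b [c _ <-]; exact: open_bY.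
  move=> U y oU Uy; have [c [bc bcU]] := Y_openP oU Uy.
  by exists (bY e c) => //; exists c.
apply/pcard_injP; exists (fun S => code_nat (pickc S)).
move=> S1 S2; rewrite !inE => -[c1 _ <-] [c2 _ <-] /code_nat_inj E.
by rewrite -pickcE E pickcE.
Qed.

Lemma main_false (H : forall (Y : topologicalType) (f : X -> Y),
      hausdorff_space Y -> continuous f -> (forall y : Y, exists x, f x = y) ->
      weight_le_continuum Y -> frechet Y) : False.
Proof.
have frY := H (Ycar e) fY (@Y_hausdorff R X e) fY_cont fY_surj Y_weight.
set A := [set fY (I c).2 | c in setT].
have clA : closure A (fY x).
  move=> B; rewrite nbhsE => -[U [oU Ux] UB].
  have [c [bc bcU]] := Y_openP oU Ux.
  case: c bc bcU => [//|a ch] bc bcU.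
  have ex : exists z, Z z /\ sat (fun i => (I (ch i)).1 z) a.
    have : nbhs x [set y | sat (fun i => (I (ch i)).1 y) a].
      apply: open_nbhs_nbhs; split; last exact: bc.
      by apply: (@open_sat X R (fun i => (I (ch i)).1)) => i; exact: interp_cont.
    by move=> /clx [z [Zz sz]]; exists z.
  pose a' := fun m => if m == 0%N then 1%N else a m.
  have [_ sP] := @P_spec (fun i => (I (ch i)).1) a' ex.
  exists (fY (I (Node a' ch)).2); split; first by exists (Node a' ch).
  by apply: UB; apply: bcU; exact: sP.
have [v [Av vx]] := frY A (fY x) clA.
have [t Ht] : exists t : nat -> code, forall n, v n = fY (I (t n)).2.
  have H1 : forall n, exists c, v n = fY (I c).2.
    by move=> n; have [c _ <-] := Av n; exists c.
  have [t Ht] := boolp.choice H1; by exists t.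
pose u := fun n => (I (t n)).2.
have Zu : forall n, Z (u n) by move=> n; exact: interp_Z.
pose s := Node (fun _ => 0%N) t.
have Is : (I s).1 = G u by [].
have [Gc Gx Gu] := G_good Zu.
have nb : nbhs (fY x) (bY e (mk1 s 0 1)).
  apply: open_nbhs_nbhs; split; first exact: open_bY.
  apply/bY_mk1; change (`|(I s).1 x - ratr 0| < ratr 1 :> R).
  by rewrite Is Gx rmorph0 rmorph1 subr0 normr0 ltr01.
case: (vx _ nb) => N _ HN.
have [n [Nn Gun]] := Gu N.
have := HN n Nn; rewrite /= Ht => /bY_mk1.
change (`|(I s).1 (u n) - ratr 0| < ratr 1 :> R -> False).
by rewrite Is Gun rmorph0 rmorph1 subr0 normr1 ltxx.
Qed.

End main.

Theorem proposition2p6 (X : topologicalType) :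
  compact [set: X] -> hausdorff_space X ->
  (forall (Y : topologicalType) (f : X -> Y),
      hausdorff_space Y -> continuous f -> (forall y : Y, exists x, f x = y) ->
      weight_le_continuum Y -> frechet Y) ->
  frechet X.
Proof.
move=> cX hX H Z x clx; apply: contrapT => nF.
have nconv : forall u : nat -> X, (forall n, Z (u n)) -> ~ (u @ \oo --> x).
  by move=> u Zu ux; apply: nF; exists u.
have [z0 Zz0] : exists z0, Z z0.
  by have [z [Zz _]] := clx setT filterT; exists z.
by apply: (@main_false Rdefinitions.R X Z x z0) => //.
Qed.
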